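(* Every group of prime order is DRR-detecting (and therefore GRR-detecting).
   Context: For a group $R$ and $S\subseteq R$, the Cayley digraph $\mathrm{Cay}(R,S)$ has vertex set $R$ and an arc from $r$ to $sr$ whenever $s\in S$. It is a DRR if $\mathrm{Aut}(\mathrm{Cay}(R,S))$ equals the right regular representation $\hat R$, and a GRR if additionally $S=S^{-1}$. $\mathrm{Aut}(R)_S$ is the group of automorphisms of $R$ fixing $S$ setwise. $R$ is DRR-detecting if for every $S\subseteq R$, $\mathrm{Aut}(R)_S=1$ implies $\mathrm{Cay}(R,S)$ is a DRR; GRR-detecting if for every $S\subseteq R$ with $S=S^{-1}$, $\mathrm{Aut}(R)_S=1$ implies $\mathrm{Cay}(R,S)$ is a GRR. *)

(* Defs.v *)
From mathcomp Require Import all_boot all_fingroup.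
Set Implicit Arguments. Unset Strict Implicit. Unset Printing Implicit Defensive.
Local Open Scope group_scope.

Section Cayley.
Variable gT : finGroupType.

(* Arc of Cay(R,S) from r to s r (s in S): i.e. y * x^-1 \in S. *)
Definition cay_arc (S : {set gT}) (x y : gT) : bool := (y * x^-1) \in S.

Definition cay_aut (S : {set gT}) : {set {perm gT}} :=
  [set f : {perm gT} | [forall x, forall y, cay_arc S (f x) (f y) == cay_arc S x y]].

Definition right_regular : {set {perm gT}} :=
  [set f : {perm gT} | [exists g : gT, [forall x, f x == x * g]]].

Definition is_DRR (S : {set gT}) : Prop := cay_aut S = right_regular.
Definition is_GRR (S : {set gT}) : Prop := S^-1 = S /\ is_DRR S.

Definition AutS (S : {set gT}) : {set {perm gT}} :=
  [set f in Aut [set: gT] | f @: S == S].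

Definition DRR_detecting : Prop :=
  forall S : {set gT}, AutS S = [set 1] -> is_DRR S.
Definition GRR_detecting : Prop :=
  forall S : {set gT}, S^-1 = S -> AutS S = [set 1] -> is_GRR S.
End Cayley.

(* Main.v *)
Require Import Defs.
From mathcomp Require Import all_boot all_algebra all_fingroup all_solvable.
Set Implicit Arguments. Unset Strict Implicit. Unset Printing Implicit Defensive.
Import GRing.Theory.


Section Frob.
Local Open Scope ring_scope.
Variable q : nat.
Hypothesis q_pr : prime q.

Lemma frobD (R : pzRingType) (x y : R) : q%:R = 0 :> R -> GRing.comm x y ->
  (x + y) ^+ q = x ^+ q + y ^+ q.
Proof.
move=> q0 cxy.
have defp := prednK (prime_gt0 q_pr).
rewrite exprDn_comm // big_ord_recr subnn -defp big_ord_recl /= defp.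
rewrite subn0 mulr1 mul1r bin0 binn big1 ?addr0 // => i _.
have /dvdnP[c ->] : (q %| 'C(q, (bump 0 i)))%N.
  by apply: prime_dvd_bin => //=; rewrite -{2}defp ltnS (valP i).
by rewrite mulrnA -mulr_natr q0 mulr0.
Qed.

Lemma frob_sum (R : pzRingType) (I : finType) (P : pred I) (F : I -> R) :
  q%:R = 0 :> R -> (forall i j, GRing.comm (F i) (F j)) ->
  (\sum_(i | P i) F i) ^+ q = \sum_(i | P i) F i ^+ q.
Proof.
move=> q0 cF.
pose K (y1 y2 : R) := y1 ^+ q = y2 /\ forall j, GRing.comm (F j) y1.
suff [] : K (\sum_(i | P i) F i) (\sum_(i | P i) F i ^+ q) by [].
apply: big_rec2; first split.
- by rewrite expr0n eqn0Ngt prime_gt0.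
- by move=> j; apply: commr0.
move=> i y1 y2 _ [e c]; split; last by move=> j; apply: commrD.
by rewrite frobD // -e.
Qed.
End Frob.

Section Mx.
Local Open Scope ring_scope.
Variable q : nat.
Hypothesis q_pr : prime q.
Variable gT : finGroupType.
Hypothesis cT : forall x y : gT, commute x y.

Definition Tm (o : gT) : 'M['F_q]_#|gT| :=
  \matrix_(i, j) ((enum_val j == (o * enum_val i)%g)%:R).
Definition Am (O : {set gT}) : 'M['F_q]_#|gT| :=
  \matrix_(i, j) (((enum_val j * (enum_val i)^-1)%g \in O)%:R).

Lemma TmM a b : Tm a * Tm b = Tm (b * a)%g.
Proof.
apply/matrixP => i j; rewrite -mulmxE !mxE.
rewrite (bigD1 (enum_rank (a * enum_val i)%g)) //= big1 ?addr0.
  by rewrite !mxE enum_rankK eqxx mul1r mulgA.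
move=> k /eqP nk; rewrite !mxE.
case: eqP => [e|]; last by rewrite mul0r.
by case: nk; rewrite -e enum_valK.
Qed.

Lemma Tm1 : Tm 1%g = 1.
Proof.
apply/matrixP => i j; rewrite !mxE mul1g.
by rewrite (inj_eq enum_val_inj) eq_sym.
Qed.

Lemma TmX a k : Tm a ^+ k = Tm (a ^+ k)%g.
Proof.
elim: k => [|k IH]; first by rewrite expr0 Tm1.
by rewrite exprSr IH TmM expgS.
Qed.

Lemma Tm_comm a b : GRing.comm (Tm a) (Tm b).
Proof. by rewrite /GRing.comm !TmM cT. Qed.

Lemma Am_sum O : Am O = \sum_(o in O) Tm o.
Proof.
apply/matrixP => i j; rewrite summxE !mxE.
set c := (enum_val j * (enum_val i)^-1)%g.
have E o : (enum_val j == (o * enum_val i)%g) = (o == c).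
  rewrite /c; apply/eqP/eqP => [->|->]; by rewrite ?mulgK ?mulgKV.
under eq_bigr do rewrite mxE E.
case cO: (c \in O).
  rewrite (bigD1 c) //= eqxx big1 ?addr0 // => o /andP[_ /negPf ->] //.
rewrite big1 // => o oO; case: eqP => // oc.
by rewrite -oc oO in cO.
Qed.

Lemma Mchar n : q%:R = 0 :> 'M['F_q]_n.
Proof.
rewrite -idmxE -raddfMn /=.
have -> : (1 *+ q : 'F_q) = 0 by apply: pchar_Fp_0.
by rewrite raddf0.
Qed.

Lemma AmX O : Am O ^+ q = \sum_(o in O) Tm (o ^+ q)%g.
Proof.
rewrite Am_sum frob_sum //; last by move=> *; apply: Tm_comm.
  by apply: eq_bigr => o _; rewrite TmX.
exact: Mchar.
Qed.
End Mx.
Section Mx2.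
Local Open Scope ring_scope.
Variable q : nat.
Hypothesis q_pr : prime q.
Variable gT : finGroupType.
Hypothesis cT : forall x y : gT, commute x y.

Definition Hinv (h : gT -> gT) (M : 'M['F_q]_#|gT|) :=
  forall x y, M (enum_rank (h x)) (enum_rank (h y)) = M (enum_rank x) (enum_rank y).

Lemma Hinv_mul h (hi : injective h) M1 M2 : Hinv h M1 -> Hinv h M2 -> Hinv h (M1 * M2).
Proof.
move=> H1 H2 x y; rewrite -mulmxE !mxE.
have fi : injective (fun k : 'I_#|gT| => enum_rank (h (enum_val k))).
  move=> k1 k2 e; rewrite -(enum_valK k1) -(enum_valK k2); congr enum_rank.
  by apply: hi; exact: enum_rank_inj e.
rewrite (reindex_inj fi) /=.
by apply: eq_bigr => k _; rewrite H1 H2 !enum_valK.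
Qed.

Lemma Hinv_exp h (hi : injective h) M k : Hinv h M -> Hinv h (M ^+ k).
Proof.
move=> HM; elim: k => [|k IH].
  move=> x y; rewrite expr0 !mxE.
  have e1 : (enum_rank (h x) == enum_rank (h y)) = (x == y).
    by apply/eqP/eqP => [e|->] //; apply: hi; apply: enum_rank_inj.
  have e2 : (enum_rank x == enum_rank y) = (x == y).
    by apply/eqP/eqP => [e|->] //; apply: enum_rank_inj.
  by rewrite e1 e2.
by rewrite exprS; apply: Hinv_mul.
Qed.

Lemma AmX_entry O (pi : injective (fun x : gT => (x ^+ q)%g)) z :
  (Am q O ^+ q) (enum_rank (1%g : gT)) (enum_rank z) = (z \in [set (x ^+ q)%g | x in O])%:R.
Proof.
rewrite AmX // summxE.
under eq_bigr do rewrite mxE !enum_rankK mulg1.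
case: imsetP => [[o0 o0O ->]|nz].
  rewrite (bigD1 o0) //= eqxx big1 ?addr0 // => o /andP[_ ne].
  by case: eqP => // /pi e; rewrite e eqxx in ne.
rewrite big1 // => o oO; case: eqP => // e; case: nz; by exists o.
Qed.
End Mx2.
Section G.
Local Open Scope group_scope.
Variable gT : finGroupType.
Variable S : {set gT}.

Definition rt (c : gT) : {perm gT} := perm (mulIg c).

Lemma rtE c x : rt c x = x * c. Proof. by rewrite permE. Qed.

Lemma arc_rt c u v : cay_arc S (u * c) (v * c) = cay_arc S u v.
Proof. by rewrite /cay_arc invMg mulgA mulgK. Qed.

Lemma cay_autP (f : {perm gT}) :
  reflect (forall x y, cay_arc S (f x) (f y) = cay_arc S x y) (f \in cay_aut S).
Proof.
rewrite inE; apply: (iffP forallP) => [H x y | H x].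
  by apply/eqP; move/forallP: (H x) => /(_ y).
by apply/forallP => y; rewrite H.
Qed.

Lemma rt_aut c : rt c \in cay_aut S.
Proof. by apply/cay_autP => x y; rewrite !rtE arc_rt. Qed.

Lemma autM (f g : {perm gT}) : f \in cay_aut S -> g \in cay_aut S -> f * g \in cay_aut S.
Proof.
move=> /cay_autP Hf /cay_autP Hg; apply/cay_autP => x y.
by rewrite !permM Hg Hf.
Qed.

Lemma autV (f : {perm gT}) : f \in cay_aut S -> f^-1 \in cay_aut S.
Proof.
move=> /cay_autP Hf; apply/cay_autP => x y.
by rewrite -Hf !permKV.
Qed.

Lemma aut1 : (1 : {perm gT}) \in cay_aut S.
Proof. by apply/cay_autP => x y; rewrite !perm1. Qed.

Definition G0 := [set h in cay_aut S | h 1 == 1].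

Lemma G0P (h : {perm gT}) : h \in G0 -> h \in cay_aut S /\ h 1 = 1.
Proof. by rewrite inE => /andP[? /eqP]. Qed.

Lemma G0M (f g : {perm gT}) : f \in G0 -> g \in G0 -> f * g \in G0.
Proof.
by move=> /G0P[af f1] /G0P[ag g1]; rewrite inE autM //= permM f1 g1 eqxx.
Qed.

Lemma G0V (f : {perm gT}) : f \in G0 -> f^-1 \in G0.
Proof.
move=> /G0P[af f1]; rewrite inE autV //=; apply/eqP.
by rewrite -{1}f1 permK.
Qed.

Lemma G01 : (1 : {perm gT}) \in G0.
Proof. by rewrite inE aut1 perm1 eqxx. Qed.

Definition Inv (X : {set gT}) := forall h, h \in G0 -> forall x, x \in X -> h x \in X.

Definition orbG (s : gT) := [set (h : {perm gT}) s | h in G0].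

Lemma orbG_inv s : Inv (orbG s).
Proof.
move=> h hG _ /imsetP[g gG ->]; apply/imsetP; exists (g * h); first exact: G0M.
by rewrite permM.
Qed.

Lemma orbG_id s : s \in orbG s.
Proof. by apply/imsetP; exists 1; rewrite ?perm1 // G01. Qed.

Lemma orbG_sub s X : Inv X -> s \in X -> orbG s \subset X.
Proof. by move=> iX sX; apply/subsetP => _ /imsetP[g gG ->]; apply: iX. Qed.

Lemma S_inv : Inv S.
Proof.
move=> h /G0P[/cay_autP ah h1] x xS.
have := ah 1 x; rewrite /cay_arc h1 invg1 !mulg1 => ->; exact: xS.
Qed.

Lemma transfer O (h : {perm gT}) x y : Inv O -> h \in G0 ->
  (h y * (h x)^-1 \in O) = (y * x^-1 \in O).
Proof.
move=> iO /G0P[ah h1].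
pose k := rt x * h * rt (h x)^-1.
have kE u : k u = h (u * x) * (h x)^-1 by rewrite !permM !rtE.
have kG : k \in G0.
  rewrite inE !autM ?rt_aut //= kE mul1g mulgV eqxx //.
have ky : k (y * x^-1) = h y * (h x)^-1 by rewrite kE mulgKV.
apply/idP/idP => H.
  have := iO _ (G0V kG) _ H; by rewrite -ky permK.
by rewrite -ky; apply: iO.
Qed.

End G.

Section Main.
Local Open Scope group_scope.
Variable gT : finGroupType.
Hypothesis p_pr : prime #|[set: gT]|.
Variable S : {set gT}.

Lemma cT : forall x y : gT, commute x y.
Proof.
have := cyclic_abelian (prime_cyclic p_pr).
move=> /centsP ab x y; apply: ab; exact: in_setT.
Qed.

Lemma Inv_pow_prime q X : prime q -> coprime #|[set: gT]| q -> Inv S X ->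
  Inv S [set x ^+ q | x in X].
Proof.
move=> q_pr co iX h hG z zX.
have K x : (x ^+ q) ^+ expg_invn [set: gT] q = x := expgK co (in_setT x).
have pi : injective (fun x : gT => x ^+ q).
  by move=> x y e; rewrite -(K x) -(K y) /= e.
have [ah h1] := G0P hG.
have HA : Hinv (fun x => h x) (Am q X).
  by move=> x y; rewrite !mxE !enum_rankK (transfer x y iX hG).
have HX : Hinv (fun x => h x) (Am q X ^+ q).
  by apply: Hinv_exp => //; exact: perm_inj.
have := HX 1 z; rewrite h1 !AmX_entry //; last exact: cT.
rewrite zX; case: (h z \in _) => //= /eqP.
exact: cT.
Qed.

Lemma Inv_pow m X : coprime #|[set: gT]| m -> Inv S X -> Inv S [set x ^+ m | x in X].
Proof.
elim: m {-2}m (leqnn m) X => [|n IH] m lem X co iX.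
  have m0 : m = 0 by apply/eqP; rewrite -leqn0.
  by move: co; rewrite m0 /coprime gcdn0 => /eqP e; move: p_pr; rewrite e.
case: (ltngtP m 1) => [m0|m1|->].
- by move: co; rewrite ltnS leqn0 in m0; rewrite (eqP m0) /coprime gcdn0 => /eqP e; move: p_pr; rewrite e.
- set r := pdiv m.
  have r_pr : prime r by apply: pdiv_prime.
  have rd : r %| m by apply: pdiv_dvd.
  have mE : m = (m %/ r * r)%N by rewrite divnK.
  have co1 : coprime #|[set: gT]| (m %/ r).
    by apply: coprime_dvdr co; apply/dvdnP; exists r; rewrite mulnC -mE.
  have co2 : coprime #|[set: gT]| r by apply: coprime_dvdr co.
  have -> : [set x ^+ m | x in X] = [set y ^+ r | y in [set x ^+ (m %/ r) | x in X]].
    by rewrite -imset_comp; apply: eq_imset => x /=; rewrite -expgM -mE.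
  apply: Inv_pow_prime => //; apply: IH => //.
  rewrite -ltnS; apply: leq_trans lem; apply: ltn_Pdiv => //.
    exact: prime_gt1.
  by apply: leq_trans m1.
- have -> : [set x ^+ 1 | x in X] = X.
    by rewrite (eq_imset _ (@expg1 _)) imset_id.
  exact: iX.
Qed.

Hypothesis hS : AutS S = [set 1].

Lemma gen s : s != 1 -> <[s]> = [set: gT].
Proof.
move=> ns; apply/eqP; rewrite eqEcard subsetT /=.
have d := cardSg (subsetT <[s]>).
case/primeP: p_pr => _ /(_ _ d) /orP[/eqP c1| /eqP ->] //.
by move: ns; rewrite -cycle_eq1 trivg_card1 c1.
Qed.

Lemma fix1 (h : {perm gT}) : h \in G0 S -> h = 1.
Proof.
move=> hG; apply/permP => a; rewrite perm1.
have [ah h1] := G0P hG.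
case: (eqVneq a 1) => [->|na] //.
have exps s : s != 1 -> exists2 k, coprime #|[set: gT]| k & s = a ^+ k.
  move=> ns; have : s \in <[a]> by rewrite gen // in_setT.
  case/cycleP => k sk; exists k => //.
  rewrite prime_coprime //; apply/negP => /dvdnP[c ck].
  by move: ns; rewrite sk ck expgM expg_cardG ?in_setT ?eqxx.
have nb : h a != 1.
  by apply: contra na => /eqP e; apply/eqP; apply: (@perm_inj _ h); rewrite e h1.
have [m com bm] := exps _ nb.
have Km x : (x ^+ m) ^+ expg_invn [set: gT] m = x := expgK com (in_setT x).
have pim : injective (fun x : gT => x ^+ m).
  by move=> x y e; rewrite -(Km x) -(Km y) /= e.
pose phi := perm pim.
have phiA : phi \in AutS S.
  rewrite inE; apply/andP; split.
    rewrite inE; apply/andP; split; first by apply/subsetP => x _; exact: in_setT.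
    by apply/morphicP => x y _ _; rewrite !permE expgMn //; apply: cT.
  rewrite eqEcard card_imset ?leqnn ?andbT; last exact: perm_inj.
  apply/subsetP => _ /imsetP[s sS ->]; rewrite permE.
  case: (eqVneq s 1) => [e|ns]; first by rewrite e expg1n -e.
  have [k ck sk] := exps s ns.
  rewrite sk in sS *.
  set k' := expg_invn [set: gT] k.
  have Kk x : (x ^+ k) ^+ k' = x := expgK ck (in_setT x).
  have co' : coprime #|[set: gT]| k'.
    rewrite prime_coprime //; apply/negP => /dvdnP[c ck'].
    by move: (Kk a); rewrite ck' expgM expg_cardG ?in_setT // => /eqP; rewrite eq_sym (negPf na).
  have iY := Inv_pow co' (@orbG_inv _ S (a ^+ k)).
  have aY : a \in [set x ^+ k' | x in orbG S (a ^+ k)].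
    by apply/imsetP; exists (a ^+ k); rewrite ?orbG_id ?Kk.
  have /imsetP[c cO hc] := iY h hG a aY.
  have -> : (a ^+ k) ^+ m = c.
    rewrite -expgM mulnC expgM -bm hc -expgM mulnC expgM; exact: Kk.
  exact: (subsetP (orbG_sub (@S_inv _ S) sS) c cO).
have : phi \in [set 1] by rewrite -hS.
rewrite inE => /eqP phi1.
have := congr1 (fun f : {perm gT} => f a) phi1; rewrite perm1 permE => am.
by rewrite bm am.
Qed.

Lemma isDRR : is_DRR S.
Proof.
apply/setP => f; apply/idP/idP => [af|].
  set c := f 1.
  have hG : f * rt c^-1 \in G0 S by rewrite inE autM ?rt_aut //= permM rtE mulgV eqxx.
  have e := fix1 hG.
  rewrite inE; apply/existsP; exists c; apply/forallP => x; apply/eqP.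
  have := congr1 (fun g : {perm gT} => g x) e; rewrite perm1 permM rtE => fx.
  by rewrite -{2}fx mulgKV.
rewrite inE => /existsP[g /forallP H].
by apply/cay_autP => x y; rewrite (eqP (H x)) (eqP (H y)) arc_rt.
Qed.
End Main.

Theorem proposition4p2 (gT : finGroupType) :
  prime #|[set: gT]| -> DRR_detecting gT /\ GRR_detecting gT.
Proof.
move=> p_pr.
have D : DRR_detecting gT by move=> S hS; exact: isDRR.
split => // S SV hS; split => //; exact: D.
Qed.
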